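(* Let $V$ and $W$ be finite-dimensional real inner-product spaces and $T:V\to W$ a linear map. Let $(T_k)$ be a sequence of geometric functions $V\to W$ converging to $T$, and suppose there is a real number $p>0$ such that for every $k$, $T_k$ has a conformality factor $r_k$ with $p\le r_k$. Then there exists $K$ such that $\mathrm{rank}(T_k)=\mathrm{rank}(T)$ for all $k>K$.
   Context: A linear map $S:V\to W$ between real inner-product spaces is a geometric function if there exist a subspace $C\subset V$ with $V=\ker S\oplus C$ and a number $r>0$ such that $\langle S u,S v\rangle=r\langle u,v\rangle$ for all $u,v\in C$; $r$ is called a conformality factor of $S$ and $C$ a Conf subspace. Convergence is with respect to the operator norm on linear maps $V\to W$. *)

(* Defs.v *)
(* Finite-dimensional real inner-product spaces are modelled as
   row-vector spaces 'rV[R]_n equipped with an ARBITRARY inner product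
   <u,v>_A = u *m A *m v^T, A symmetric positive definite.
   Linear maps V -> W are matrices S : 'M_(n,m) acting by u |-> u *m S. *)
From HB Require Import structures.
From mathcomp Require Import all_boot all_order all_algebra.
From mathcomp Require Import reals.
Set Implicit Arguments. Unset Strict Implicit. Unset Printing Implicit Defensive.
Import Order.TTheory GRing.Theory Num.Theory.
Local Open Scope ring_scope.

Definition ip (R : realType) (n : nat) (A : 'M[R]_n) (u v : 'rV[R]_n) : R :=
  (u *m A *m v^T) 0 0.

Definition is_inner_product (R : realType) (n : nat) (A : 'M[R]_n) : Prop :=
  A^T = A /\ forall u : 'rV[R]_n, u != 0 -> 0 < ip A u u.

Definition ipnorm (R : realType) (n : nat) (A : 'M[R]_n) (u : 'rV[R]_n) : R :=
  Num.sqrt (ip A u u).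

Definition conf_subspace (R : realType) (n m : nat) (A : 'M[R]_n) (B : 'M[R]_m)
    (S : 'M[R]_(n, m)) (C : 'M[R]_n) (r : R) : Prop :=
  [/\ (kermx S + C :=: 1%:M)%MS, mxdirect (kermx S + C)%MS & 
      forall u v : 'rV[R]_n, (u <= C)%MS -> (v <= C)%MS ->
        ip B (u *m S) (v *m S) = r * ip A u v].

Definition conformality_factor (R : realType) (n m : nat) (A : 'M[R]_n)
    (B : 'M[R]_m) (S : 'M[R]_(n, m)) (r : R) : Prop :=
  0 < r /\ exists C : 'M[R]_n, conf_subspace A B S C r.

Definition geometric (R : realType) (n m : nat) (A : 'M[R]_n) (B : 'M[R]_m)
    (S : 'M[R]_(n, m)) : Prop :=
  exists r : R, conformality_factor A B S r.

Definition opnorm_le (R : realType) (n m : nat) (A : 'M[R]_n) (B : 'M[R]_m)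
    (D : 'M[R]_(n, m)) (e : R) : Prop :=
  forall u : 'rV[R]_n, ipnorm B (u *m D) <= e * ipnorm A u.

Definition op_converges (R : realType) (n m : nat) (A : 'M[R]_n) (B : 'M[R]_m)
    (Tk : nat -> 'M[R]_(n, m)) (T : 'M[R]_(n, m)) : Prop :=
  forall e : R, 0 < e -> exists N : nat, forall k : nat, (N <= k)%N ->
    opnorm_le A B (Tk k - T) e.

(* Main.v *)
Require Import Defs.
From HB Require Import structures.
From mathcomp Require Import all_boot all_order all_algebra.
From mathcomp Require Import reals.
From mathcomp Require Import ring lra zify.
Set Implicit Arguments. Unset Strict Implicit.
Import Order.TTheory GRing.Theory Num.Theory.
Local Open Scope ring_scope.

Section S.
Variable R : realType.

Lemma ipDl n (A : 'M[R]_n) u v w : ip A (u + v) w = ip A u w + ip A v w.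
Proof. by rewrite /ip !mulmxDl mxE. Qed.
Lemma ipZl n (A : 'M[R]_n) a u w : ip A (a *: u) w = a * ip A u w.
Proof. by rewrite /ip -!scalemxAl mxE. Qed.
Lemma ipNl n (A : 'M[R]_n) u w : ip A (- u) w = - ip A u w.
Proof. by rewrite -scaleN1r ipZl mulN1r. Qed.
Lemma ipC n (A : 'M[R]_n) u v : A^T = A -> ip A u v = ip A v u.
Proof.
move=> hA; rewrite /ip.
transitivity (((u *m A *m v^T)^T) 0 0); first by rewrite [RHS]mxE.
by rewrite !trmx_mul trmxK hA mulmxA.
Qed.

Lemma ip_ge0 n (A : 'M[R]_n) u : is_inner_product A -> 0 <= ip A u u.
Proof.
case=> _ h; have [->|/h/ltW //] := eqVneq u 0.
by rewrite /ip !mul0mx mxE.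
Qed.

Lemma ip_eq0 n (A : 'M[R]_n) u : is_inner_product A -> ip A u u <= 0 -> u = 0.
Proof.
case=> _ h hu; apply/eqP; apply: contraTT hu => /h; rewrite -ltNge //.
Qed.

Lemma ipDr n (A : 'M[R]_n) u v w : A^T = A -> ip A w (u + v) = ip A w u + ip A w v.
Proof. by move=> h; rewrite !(ipC w) // ipDl. Qed.
Lemma ipZr n (A : 'M[R]_n) a u w : A^T = A -> ip A w (a *: u) = a * ip A w u.
Proof. by move=> h; rewrite !(ipC w) // ipZl. Qed.
Lemma ipNr n (A : 'M[R]_n) u w : A^T = A -> ip A w (- u) = - ip A w u.
Proof. by move=> h; rewrite !(ipC w) // ipNl. Qed.

Lemma cs_weak n (A : 'M[R]_n) u w : is_inner_product A ->
  ip A u w ^+ 2 <= ip A u u * (ip A w w + 1) ^+ 2.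
Proof.
move=> hA; have hs : A^T = A by case: hA.
set a := ip A u u; set b := ip A u w; set c := ip A w w.
have c0 : 0 <= c by exact: ip_ge0.
have c1 : 0 < c + 1 by lra.
set t := b / (c + 1).
have ht : t * (c + 1) = b by rewrite /t divfK // gt_eqF.
have := ip_ge0 (u - t *: w) hA.
rewrite ipDl ipNl ipZl !ipDr // !ipNr // !ipZr // (ipC w u) // -/a -/b -/c => h.
have h2 : 0 <= (a - t * b - t * (b - t * c)) * (c + 1) ^+ 2 by apply: mulr_ge0; [lra|apply: sqr_ge0].
rewrite -ht; rewrite -ht in h2.
nra.
Qed.

Lemma pd_unit n (A : 'M[R]_n) : is_inner_product A -> A \in unitmx.
Proof.
move=> hA; rewrite -row_free_unit; apply: inj_row_free => v hv.
by apply: (ip_eq0 hA); rewrite /ip hv mul0mx mxE.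
Qed.

Lemma sum_ge_term (I : finType) (F : I -> R) i : (forall j, 0 <= F j) -> F i <= \sum_j F j.
Proof.
move=> h; rewrite (bigD1 i) //= lerDl; apply: sumr_ge0 => j _; exact: h.
Qed.

Lemma coord_bound n (A : 'M[R]_n) : is_inner_product A ->
  exists d, 0 <= d /\ forall (u : 'rV[R]_n) i, (u 0 i) ^+ 2 <= d * ip A u u.
Proof.
move=> hA; have hU := pd_unit hA.
pose w (i : 'I_n) : 'rV[R]_n := (invmx A *m delta_mx i 0)^T.
have hw : forall u i, ip A u (w i) = u 0 i.
  move=> u i; rewrite /ip /w trmxK mulmxA (mulmxK hU) -colE mxE //.
exists (\sum_i (ip A (w i) (w i) + 1) ^+ 2); split.
  by apply: sumr_ge0 => i _; apply: sqr_ge0.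
move=> u i; rewrite -hw; apply: le_trans (cs_weak _ _ hA) _.
rewrite mulrC; apply: ler_wpM2r; first exact: ip_ge0.
by apply: (@sum_ge_term _ (fun j => (ip A (w j) (w j) + 1) ^+ 2) i) => j; apply: sqr_ge0.
Qed.

Lemma term_bound (x y m D : R) : x ^+ 2 <= D -> y ^+ 2 <= D -> x * m * y <= `|m| * D.
Proof.
move=> hx hy.
have hX : `|x| ^+ 2 = x ^+ 2 by rewrite real_normK // num_real.
have hY : `|y| ^+ 2 = y ^+ 2 by rewrite real_normK // num_real.
have hxy : `|x| * `|y| <= D.
  have := sqr_ge0 (`|x| - `|y|); rewrite sqrrB hX hY => h; lra.
apply: le_trans (ler_norm _) _.
rewrite !normrM.
have -> : `|x| * `|m| * `|y| = (`|x| * `|y|) * `|m| by rewrite mulrAC.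
rewrite [`|m| * D]mulrC; exact: ler_wpM2r.
Qed.

Lemma quad_bound m (B : 'M[R]_m) (M : 'M[R]_m) : is_inner_product B ->
  exists c, 0 <= c /\ forall v : 'rV[R]_m, (v *m M *m v^T) 0 0 <= c * ip B v v.
Proof.
move=> hB; have [d [d0 hd]] := coord_bound hB.
exists (\sum_j \sum_i (`|M i j| * d)); split.
  by apply: sumr_ge0 => j _; apply: sumr_ge0 => i _; apply: mulr_ge0.
move=> v; rewrite mxE mulr_suml; apply: ler_sum => j _.
rewrite !mxE mulr_suml big_distrl /=; apply: ler_sum => i _.
by have := term_bound (M i j) (hd v i) (hd v j); rewrite mulrA.
Qed.

Lemma map_bound n m (A : 'M[R]_n) (B : 'M[R]_m) (L : 'M[R]_(m, n)) :
  is_inner_product B ->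
  exists c, 0 <= c /\ forall v : 'rV[R]_m, ip A (v *m L) (v *m L) <= c * ip B v v.
Proof.
move=> hB; have [c [c0 hc]] := quad_bound (L *m A *m L^T) hB.
exists c; split => // v; apply: le_trans (hc v); rewrite /ip.
by rewrite trmx_mul !mulmxA.
Qed.

Lemma sqrt_sq (x y e : R) : 0 <= x -> 0 <= y -> 0 <= e ->
  Num.sqrt x <= e * Num.sqrt y -> x <= e ^+ 2 * y.
Proof.
move=> x0 y0 e0 h.
have hs := sqr_sqrtr x0; have ht := sqr_sqrtr y0.
have s0 := sqrtr_ge0 x; have t0 := sqrtr_ge0 y.
rewrite -hs -ht; set s := Num.sqrt x in h s0 *; set t := Num.sqrt y in h t0 *.
nra.
Qed.

Lemma cap0 n m1 m2 (X : 'M[R]_(m1, n)) (Y : 'M[R]_(m2, n)) :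
  (forall v : 'rV_n, (v <= X)%MS -> (v <= Y)%MS -> v = 0) -> (X :&: Y)%MS = 0.
Proof.
move=> h; apply/row_matrixP => i; rewrite row0; apply: h.
  exact: submx_trans (row_sub i _) (capmxSl _ _).
exact: submx_trans (row_sub i _) (capmxSr _ _).
Qed.

Lemma rank_conf n m (A : 'M[R]_n) (B : 'M[R]_m) S C r :
  conf_subspace A B S C r -> \rank C = \rank S.
Proof.
case=> hsum /mxdirect_addsP hdir _.
have h1 := mxrank_disjoint_sum hdir.
rewrite hsum.1 mxrank1 mxrank_ker in h1.
have := rank_leq_row S; lia.
Qed.

End S.

Unset Implicit Arguments.
Set Strict Implicit.

Theorem mainTheorem6 (R : realType) (n m : nat) (A : 'M[R]_n) (B : 'M[R]_m)
    (hA : is_inner_product A) (hB : is_inner_product B)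
    (T : 'M[R]_(n, m)) (Tk : nat -> 'M[R]_(n, m))
    (hgeo : forall k, geometric A B (Tk k))
    (hconv : op_converges A B Tk T)
    (p : R) (hp : 0 < p)
    (hfac : forall k, exists rk : R, conformality_factor A B (Tk k) rk /\ p <= rk) :
  exists K : nat, forall k : nat, (K < k)%N -> \rank (Tk k) = \rank T.
Proof.
pose e1 := p / (p + 1).
have he1 : e1 * (p + 1) = p by rewrite /e1 divfK // gt_eqF //; lra.
have e1p : 0 < e1 by rewrite /e1 divr_gt0 //; lra.
have e1s : e1 ^+ 2 < p by nra.
have [c [c0 hc]] := map_bound A (pinvmx T) hB.
pose e2 := 1 / (c + 1).
have he2 : e2 * (c + 1) = 1 by rewrite /e2 divfK // gt_eqF //; lra.
have e2p : 0 < e2 by rewrite /e2 divr_gt0 //; lra.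
have e2s : e2 ^+ 2 * c < 1 by nra.
have [N1 hN1] := hconv e1 e1p.
have [N2 hN2] := hconv e2 e2p.
exists (maxn N1 N2) => k hk.
have hk1 : (N1 <= k)%N by lia.
have hk2 : (N2 <= k)%N by lia.
have hsA : A^T = A by case: hA.
have hsB : B^T = B by case: hB.
apply/eqP; rewrite eqn_leq; apply/andP; split.
-
  have [rk [[rk0 [C hC]] prk]] := hfac k.
  rewrite -(rank_conf hC).
  have hcap : (C :&: kermx T)%MS = 0.
    apply: cap0 => v vC /sub_kermxP vT.
    case: hC => _ _ hip.
    have h := hN1 k hk1 v; rewrite /ipnorm in h.
    rewrite mulmxBr vT subr0 in h.
    have := sqrt_sq (ip_ge0 _ hB) (ip_ge0 _ hA) (ltW e1p) h.
    rewrite hip // => h2.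
    have a0 := ip_ge0 v hA.
    apply: (ip_eq0 hA); nra.
  have := mxrank_disjoint_sum hcap; rewrite mxrank_ker.
  have := rank_leq_col (C + kermx T)%MS; have := rank_leq_row T; lia.
-
  have hcap : (T :&: kermx (pinvmx T *m Tk k))%MS = 0.
    apply: cap0 => v vT /sub_kermxP vK.
    rewrite mulmxA in vK.
    have hvT := mulmxKpV vT.
    have h := hN2 k hk2 (v *m pinvmx T); rewrite /ipnorm in h.
    rewrite mulmxBr vK hvT sub0r ipNl ipNr // opprK in h.
    have := sqrt_sq (ip_ge0 _ hB) (ip_ge0 _ hA) (ltW e2p) h => h2.
    have h3 := hc v.
    have b0 := ip_ge0 v hB.
    have a0 := ip_ge0 (v *m pinvmx T) hA.
    apply: (ip_eq0 hB); nra.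
  have := mxrank_mul_ker T (pinvmx T *m Tk k); rewrite hcap mxrank0.
  have := mxrankM_maxr T (pinvmx T *m Tk k).
  have := mxrankM_maxr (pinvmx T) (Tk k).
  lia.
Qed.
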